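(* Every $\mathrm{NP}_2$-irreducible digital image is $\mathrm{NP}_2$-rigid.
   Context: A digital image is a finite set $X\subset\mathbb{Z}^n$ with a reflexive symmetric adjacency relation (a finite reflexive graph); continuous maps send adjacent points to adjacent points. On products, $\mathrm{NP}_2$ declares two tuples adjacent iff coordinates are adjacent in at most 2 positions and equal elsewhere. An $\mathrm{NP}_2$-homotopy from $f$ to $g:X\to Y$ is an $\mathrm{NP}_2$-continuous $H:X\times[0,m]_{\mathbb{Z}}\to Y$ (interval with $a\sim b\iff|a-b|\le1$) with $H(\cdot,0)=f$, $H(\cdot,m)=g$; write $f\simeq_2 g$. $X,Y$ are $\mathrm{NP}_2$-homotopy equivalent if there are continuous $f:X\to Y$, $g:Y\to X$ with $g\circ f\simeq_2\mathrm{id}_X$, $f\circ g\simeq_2\mathrm{id}_Y$. $X$ is $\mathrm{NP}_2$-irreducible if it is not $\mathrm{NP}_2$-homotopy equivalent to a digital image with fewer points. $X$ is $\mathrm{NP}_2$-rigid if $\mathrm{id}_X$ is not $\mathrm{NP}_2$-homotopic to any map $X\to X$ other than itself. *)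

(* Defs.v *)
From mathcomp Require Import all_boot.
Set Implicit Arguments. Unset Strict Implicit. Unset Printing Implicit Defensive.

Record digimg := DigImg {
  pts :> finType;
  adj : rel pts;
  adj_refl : reflexive adj;
  adj_sym : symmetric adj
}.

Definition dcontinuous (X Y : digimg) (f : X -> Y) : Prop :=
  forall x x' : X, adj x x' -> adj (f x) (f x').

Definition iadj (a b : nat) : bool := (a <= b.+1) && (b <= a.+1).

(* NP_2 adjacency on X x [0,m]_Z: the product has 2 factors, so "adjacent in
   at most 2 coordinates and equal elsewhere" means adjacent in each coordinate. *)
Definition np2_adj (X : digimg) (p q : X * nat) : bool :=
  adj p.1 q.1 && iadj p.2 q.2.

(* NP_2-homotopy from f to g with m steps; H is given on X x nat and only its
   values on X x [0,m] matter. *)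
Definition np2_homotopy (X Y : digimg) (f g : X -> Y) (m : nat)
    (H : X -> nat -> Y) : Prop :=
  [/\ forall (x x' : X) (t t' : nat), t <= m -> t' <= m ->
        np2_adj (x, t) (x', t') -> adj (H x t) (H x' t'),
      forall x, H x 0 = f x
    & forall x, H x m = g x].

Definition np2_homotopic (X Y : digimg) (f g : X -> Y) : Prop :=
  exists m H, @np2_homotopy X Y f g m H.

Definition np2_htpy_equiv (X Y : digimg) : Prop :=
  exists (f : X -> Y) (g : Y -> X),
    [/\ dcontinuous f, dcontinuous g,
        np2_homotopic (fun x => g (f x)) id
      & np2_homotopic (fun y => f (g y)) id].

Definition np2_irreducible (X : digimg) : Prop :=
  forall Y : digimg, #|Y| < #|X| -> ~ np2_htpy_equiv X Y.

Definition np2_rigid (X : digimg) : Prop :=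
  forall g : X -> X, np2_homotopic id g -> forall x, g x = x.

(* Main.v *)
Require Import Defs.
From mathcomp Require Import all_boot.
Set Implicit Arguments. Unset Strict Implicit. Unset Printing Implicit Defensive.

Section Red.
Variables (X : digimg) (x y : X).
Hypothesis hxy : y != x.
Hypothesis hN : forall z, adj x z -> adj z y.

Definition Yt := {z : X | z != x}.
Definition yadj : rel Yt := fun a b => adj (val a) (val b).
Lemma yadj_refl : reflexive yadj. Proof. move=> a; exact: adj_refl. Qed.
Lemma yadj_sym : symmetric yadj. Proof. move=> a b; exact: adj_sym. Qed.
Definition Yimg := @DigImg Yt yadj yadj_refl yadj_sym.

Definition r (z : X) : X := if z == x then y else z.
Lemma r_neq z : r z != x. Proof. rewrite /r; case: (z =P x) => [_|/eqP //]; exact: hxy. Qed.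
Definition fY (z : X) : Yimg := exist _ (r z) (r_neq z).
Definition gY (a : Yimg) : X := val a.

Lemma keyr a b : adj a b -> adj (r a) b.
Proof.
rewrite /r; case: (a =P x) => // -> h; rewrite adj_sym; exact: hN.
Qed.
Lemma r_cont a b : adj a b -> adj (r a) (r b).
Proof. move=> h; have h1 := keyr h; rewrite adj_sym; apply: keyr; by rewrite adj_sym. Qed.

Lemma red : np2_htpy_equiv X Yimg.
Proof.
exists fY, gY; split.
- move=> a b h; exact: r_cont.
- by move=> a b.
- exists 1, (fun z t => if t == 0 then r z else z); split => //.
  move=> a b [|[|t]] [|[|t']] //= _ _ /andP [h _] //=.
  + exact: r_cont.
  + exact: keyr.
  + rewrite adj_sym; apply: keyr; by rewrite adj_sym.
- exists 0, (fun a t => a); split => //.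
  + by move=> a b t t' _ _ /andP [h _].
  + case=> z hz /=; apply: val_inj => /=; rewrite /r (negbTE hz).
  by [].
Qed.
End Red.

Lemma card_Yimg (X : digimg) (x y : X) (hxy : y != x) : #|Yimg x| < #|X|.
Proof.
rewrite /= card_sig.
have := cardC1 x => /= ->.
have : 0 < #|X| by apply/card_gt0P; exists x.
by case: #|X|.
Qed.

Theorem mainTheorem11 (X : digimg) : np2_irreducible X -> np2_rigid X.
Proof.
move=> hirr g [m [H [hc h0 hm]]] x.
apply/eqP/negPn/negP => hne.
have ex : exists t, [exists z, H z t != z].
  by exists m; apply/existsP; exists x; rewrite hm.
case: (ex_minnP ex) => t /existsP [z hz] hmin.
have t0 : 0 < t by case: t hz hmin => [|//]; rewrite h0 eqxx.
have hid : forall w, H w t.-1 = w.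
  move=> w; apply/eqP/negPn/negP => hw.
  have := hmin t.-1 (introT existsP (ex_intro _ w hw)).
  by rewrite leqNgt ltn_predL t0.
have htm : t <= m by apply: hmin; apply/existsP; exists x; rewrite hm.
have hN : forall w, adj z w -> adj w (H z t).
  move=> w hw; rewrite -{1}(hid w); apply: hc.
  - by rewrite (leq_trans (leq_pred t)).
  - done.
  - rewrite /np2_adj /= adj_sym hw /iadj /=.
    by rewrite prednK // leqnn andbT (leq_trans (leq_pred t) (leqnSn t)).
apply: (hirr (Yimg z)); first exact: (card_Yimg hz).
exact: (red hz hN).
Qed.
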